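(* Let $X$ be a strongly connected finite digraph with $\delta(X)=0$. Then $$\mathcal{BF}_X(\mathcal{L}(X))\subseteq\mathcal{BF}_X(\mathbb{Z}V_X)\subseteq\mathcal{L}(X),$$ and $\mathrm{rank}_{\mathbb{Z}}\mathcal{BF}_X(\mathcal{L}(X))=\mathrm{rank}_{\mathbb{Z}}\mathcal{BF}_X(\mathbb{Z}V_X)=\mathrm{rank}_{\mathbb{Z}}\mathcal{L}(X)$.
   Context: Digraph $X=(V_X,E_X)$ with incidence $e\mapsto(o(e),t(e))$; strongly connected means a directed path exists between any two distinct vertices. For finite $X$: $\mathcal{A}_X(v)=\sum_{o(e)=v}t(e)$ on $\mathbb{Z}V_X$, $\mathcal{BF}_X=\mathcal{I}-\mathcal{A}_X$, $\mathrm{BF}(X)=\mathrm{coker}\,\mathcal{BF}_X$, $g_X(u)=\det(\mathcal{I}-\mathcal{A}_Xu)$, $r_X=\mathrm{ord}_{u=1}g_X$, $\delta(X)=r_X-\mathrm{rank}_{\mathbb{Z}}\mathrm{BF}(X)$. Writing $\mathcal{BF}_{\mathbb{Q}}$ for the extension to $\mathbb{Q}V_X$, one has (when $\delta(X)=0$) the decomposition $\mathbb{Q}V_X=\ker\mathcal{BF}_{\mathbb{Q}}\oplus W$ with $W=\mathrm{Im}\,\mathcal{BF}_{\mathbb{Q}}$, and $\mathcal{L}(X)=\mathbb{Z}V_X\cap W$ (with $\mathbb{Z}V_X\subseteq\mathbb{Q}V_X$). *)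

(* Defs.v *)
From HB Require Import structures.
From mathcomp Require Import all_boot all_order all_algebra.
From mathcomp Require Import boolp.
Set Implicit Arguments. Unset Strict Implicit. Unset Printing Implicit Defensive.
Import Order.TTheory GRing.Theory Num.Theory.
Local Open Scope ring_scope.

(* A finite digraph with vertex set 'I_n and edge set E, incidence e |-> (o e, t e). *)

Definition adj (n : nat) (E : finType) (o t : E -> 'I_n) : rel 'I_n :=
  fun u w => [exists e, (o e == u) && (t e == w)].

Definition strongly_connected (n : nat) (E : finType) (o t : E -> 'I_n) : Prop :=
  forall u v : 'I_n, u != v -> connect (adj o t) u v.

(* Matrix of A_X acting on row vectors x (x *m A): A v w = #{e | o e = v, t e = w},
   so that the basis vector v is sent to sum_{o e = v} t e. *)
Definition adjmx (n : nat) (E : finType) (o t : E -> 'I_n) : 'M[int]_n :=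
  \matrix_(v, w) (#|[pred e | (o e == v) && (t e == w)]|)%:Z.

Definition BFmx (n : nat) (E : finType) (o t : E -> 'I_n) : 'M[int]_n :=
  1%:M - adjmx o t.

Definition gX (n : nat) (E : finType) (o t : E -> 'I_n) : {poly int} :=
  \det (\matrix_(i, j) ((i == j)%:R%:P - ((adjmx o t i j)%:P * 'X)) : 'M[{poly int}]_n).

Definition rX (n : nat) (E : finType) (o t : E -> 'I_n) : nat :=
  mup (1 : rat) (map_poly (intr : int -> rat) (gX o t)).

(* rank over Z of the cokernel ZV / (ZV *m B): maximal number of elements of ZV
   whose classes in the quotient are Z-linearly independent (this is always <= n). *)
Definition coker_indep (n r : nat) (B : 'M[int]_n) (M : 'M[int]_(r, n)) : Prop :=
  forall c : 'rV[int]_r, (exists y : 'rV[int]_n, c *m M = y *m B) -> c = 0.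

Definition rank_coker (n : nat) (B : 'M[int]_n) : nat :=
  \max_(r < n.+1 | `[< exists M : 'M[int]_(r, n), coker_indep B M >]) r.

Definition indep_in (n r : nat) (S : 'rV[int]_n -> Prop) (M : 'M[int]_(r, n)) : Prop :=
  (forall i, S (row i M)) /\ (forall c : 'rV[int]_r, c *m M = 0 -> c = 0).

Definition Zrank (n : nat) (S : 'rV[int]_n -> Prop) : nat :=
  \max_(r < n.+1 | `[< exists M : 'M[int]_(r, n), indep_in S M >]) r.

Definition deltaX (n : nat) (E : finType) (o t : E -> 'I_n) : int :=
  (rX o t)%:Z - (rank_coker (BFmx o t))%:Z.

Definition ZV (n : nat) : 'rV[int]_n -> Prop := fun _ => True.

(* L(X) = ZV ∩ W, W = Im BF_Q (row space over Q of BF) *)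
Definition LX (n : nat) (E : finType) (o t : E -> 'I_n) : 'rV[int]_n -> Prop :=
  fun x => (map_mx (intr : int -> rat) x <= map_mx (intr : int -> rat) (BFmx o t))%MS.

Definition BFimg (n : nat) (E : finType) (o t : E -> 'I_n) (S : 'rV[int]_n -> Prop)
  : 'rV[int]_n -> Prop :=
  fun y => exists2 x, S x & y = x *m BFmx o t.

(* Main.v *)
Require Import Defs.
From HB Require Import structures.
From mathcomp Require Import all_boot all_order all_algebra.
From mathcomp Require Import boolp.
From mathcomp Require Import ring zify.
Set Implicit Arguments. Unset Strict Implicit. Unset Printing Implicit Defensive.
Import Order.TTheory GRing.Theory Num.Theory.
Local Open Scope ring_scope.



Lemma rank_drsub (F : fieldType) m1 m2 n1 n2 (X : 'M[F]_(m1 + m2, n1 + n2)) :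
  (\rank (drsubmx X) <= \rank X)%N.
Proof.
have -> : drsubmx X = row_mx 0 1%:M *m X *m col_mx 0 1%:M.
  rewrite -{2}(submxK X) mul_row_col mul0mx add0r mul1mx.
  by rewrite mul_row_col mulmx0 add0r mulmx1.
by rewrite (leq_trans (mxrankM_maxl _ _)) // mxrankM_maxr.
Qed.

Lemma rank_conj (F : fieldType) n (P X : 'M[F]_n) : P \in unitmx -> \rank (P *m X *m invmx P) = \rank X.
Proof.
move=> uP; rewrite mxrankMfree; last by rewrite row_free_unit unitmx_inv.
apply/eqP; rewrite eqn_leq mxrankM_maxr /=.
by rewrite -{1}[X](mulKmx uP) mxrankM_maxr.
Qed.

Definition Mx (F : fieldType) n (X : 'M[F]_n) : 'M[{poly F}]_n := (1 - 'X) *: 1%:M + 'X *: map_mx polyC X.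

Lemma det_Mx_conj (F : fieldType) n (P X : 'M[F]_n) : P \in unitmx ->
  \det (Mx (P *m X *m invmx P)) = \det (Mx X).
Proof.
move=> uP.
have -> : Mx (P *m X *m invmx P) = map_mx polyC P *m Mx X *m map_mx polyC (invmx P).
  rewrite /Mx mulmxDr mulmxDl -!scalemxAr -!scalemxAl mulmx1 -!map_mxM mulmxV //.
  by rewrite map_mx1.
rewrite !det_mulmx mulrC mulrA -det_mulmx -map_mxM mulVmx // map_mx1 det1 mul1r.
by [].
Qed.

Lemma core3 (F : fieldType) k m (B : 'M[F]_(k+m)) (P1 : 'M_(k, k+m)) (P2 : 'M_(m, k+m)) :
  col_mx P1 P2 \in unitmx -> P1 *m B = 0 -> \rank B = m -> (\rank (B *m B) < m)%N ->
  ('X - 1)^+k.+1 %| \det (Mx B).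
Proof.
set P := col_mx P1 P2 => uP hP1 rB rBB.
set C := P *m B *m invmx P.
have uC : usubmx C = 0 by rewrite /C /P !mul_col_mx col_mxKu hP1 !mul0mx.
have eC : C = block_mx 0 0 (dlsubmx C) (drsubmx C).
  rewrite -{1}(submxK C) /ulsubmx /ursubmx uC -row_mx0 row_mxKl row_mxKr //.
rewrite -(det_Mx_conj B uP) -/C.
set C22 := drsubmx C.
have nC22 : ~~ (C22 \in unitmx).
  apply/negP => u22; move: rBB.
  rewrite -(rank_conj (B *m B) uP).
  have -> : P *m (B *m B) *m invmx P = C *m C.
    by rewrite /C !mulmxA -[_ *m invmx P *m P]mulmxA mulVmx // mulmx1.
  apply/negP; rewrite -leqNgt.
  apply: leq_trans (rank_drsub _).
  rewrite eC mulmx_block block_mxKdr !mulmx0 add0r mxrank_unit //.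
  by rewrite unitmx_mul u22.
rewrite /Mx eC map_block_mx !map_mx0 (scalar_mx_block k m) !scale_block_mx add_block_mx.
rewrite !scaler0 !addr0 det_lblock {1}scalemx1 det_scalar.
set q := \det _.
have q1 : q.[1] = \det (drsubmx C).
  rewrite /q -horner_evalE -det_map_mx; congr (\det _); apply/matrixP => i j.
  rewrite !mxE /=.
  rewrite horner_evalE !hornerE.
  by rewrite subrr mul0r add0r.

have rq : root q 1.
  by rewrite /root q1 -/C22; move: nC22; rewrite unitmxE unitfE negbK.
have [r ->] := factor_theorem _ _ rq.
rewrite polyC1.
have e1 : (1 - 'X : {poly F}) = - ('X - 1) by rewrite opprB.
have -> : (1 - 'X)^+k * (r * ('X - 1)) = ((-1)^+k * r) * ('X - 1)^+k.+1 :> {poly F}.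
  rewrite e1 (exprNn ('X - 1)) exprSr.
  move: ((-1)^+k : {poly F}) (('X - 1)^+k : {poly F}) => a b; ring.
exact: dvdp_mull.
Qed.

Lemma core2 (F : fieldType) n (B : 'M[F]_n) : (\rank (B *m B) < \rank B)%N ->
  ('X - 1)^+(n - \rank B).+1 %| \det (Mx B).
Proof.
move=> hBB.
set K := kermx B.
have hk : \rank K = (n - \rank B)%N by rewrite mxrank_ker.
have hc : \rank K^C%MS = (n - \rank K)%N by rewrite mxrank_compl.
have [k [m [P1 [P2 [en ek e1 e2]]]]] : exists k m (P1 : 'M[F]_(k, n)) (P2 : 'M_(m,n)),
   [/\ n = (k + m)%N, k = (n - \rank B)%N, (P1 :=: K)%MS & (P2 :=: K^C%MS)%MS].
  exists _, _, (row_base K), (row_base K^C%MS); split; try exact: eq_row_base.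
    by rewrite hc subnKC // rank_leq_col.
  exact: hk.
have rP : \rank (col_mx P1 P2) = n.
  rewrite -addsmxE (adds_eqmx e1 e2); exact/eqP/addsmx_compl_full.
have hP1 : P1 *m B = 0 by apply/sub_kermxP; rewrite e1.
have rBn : (\rank B <= n)%N by exact: rank_leq_row.
rewrite -ek.
subst n.
apply: (core3 (P1 := P1) (P2 := P2)) => //.
- by rewrite -row_full_unit /row_full rP.
- lia.
- lia.
Qed.


Definition BQ n (E : finType) (o t : E -> 'I_n) : 'M[rat]_n :=
  map_mx (intr : int -> rat) (BFmx o t).

Lemma gX_Mx n (E : finType) (o t : E -> 'I_n) :
  map_poly (intr : int -> rat) (gX o t) = \det (Mx (BQ o t)).
Proof.
rewrite /gX -det_map_mx; congr (\det _); apply/matrixP => i j.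
rewrite !mxE /BFmx.
rewrite rmorphB /= map_polyC rmorphM /= map_polyX map_polyC /=.
rewrite rmorphB /= polyCB; case: (i == j); rewrite /= ?mulr1n ?mulr0n ?rmorph1 ?rmorph0 ?polyC1 ?polyC0; ring.
Qed.

Lemma Mx_ne0 n (X : 'M[rat]_n) : \det (Mx X) != 0.
Proof.
have h : (\det (Mx X)).[0] = 1.
  rewrite -horner_evalE -det_map_mx -(det1 _ n); congr (\det _); apply/matrixP => i j.
  rewrite !mxE.
  rewrite /= horner_evalE !hornerE.
  by case: (i == j); rewrite ?mulr1n ?mulr0n hornerE.

by apply/eqP => h0; move: h; rewrite h0 horner0 => /eqP; rewrite eq_sym oner_eq0.
Qed.

Lemma rX_ge n (E : finType) (o t : E -> 'I_n) :
  (\rank (BQ o t *m BQ o t) < \rank (BQ o t))%N -> ((n - \rank (BQ o t)).+1 <= rX o t)%N.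
Proof.
move=> h; rewrite /rX gX_Mx mup_geq ?Mx_ne0 // polyC1; exact: core2.
Qed.


Notation mQ := (map_mx (intr : int -> rat)).

Lemma mQ_inj p q : injective (mQ : 'M[int]_(p, q) -> 'M[rat]_(p, q)).
Proof.
move=> A B eAB; apply/matrixP => i j; move/matrixP/(_ i j): eAB; rewrite !mxE.
by move/eqP; rewrite eqr_int => /eqP.
Qed.

Lemma clear_den p q (V : 'M[rat]_(p, q)) :
  exists2 D : int, D != 0 & exists W : 'M[int]_(p, q), mQ W = D%:~R *: V.
Proof.
pose R (k : 'I_p * 'I_q) := \prod_(l | l != k) denq (V l.1 l.2).
exists (\prod_(l : 'I_p * 'I_q) denq (V l.1 l.2)).
  by apply/prodf_neq0 => l _; exact: denq_neq0.
exists (\matrix_(i, j) (numq (V i j) * R (i, j))).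
apply/matrixP => i j; rewrite !mxE (bigD1 (i, j)) //= intrM numqE intrM.
rewrite /R; ring.
Qed.

Lemma indepQ r n (M : 'M[int]_(r, n)) :
  (forall c : 'rV[int]_r, c *m M = 0 -> c = 0) -> row_free (mQ M).
Proof.
move=> hM; rewrite -kermx_eq0; apply/eqP/row_matrixP => i; rewrite row0.
set v := row i _.
have hv : v *m mQ M = 0 by rewrite /v -row_mul mulmx_ker row0.
have [D D0 [W hW]] := clear_den v.
have : W *m M = 0.
  by apply: mQ_inj; rewrite map_mxM hW -scalemxAl hv scaler0 map_mx0.
move/hM => W0; move: hW; rewrite W0 map_mx0.
move/esym/eqP; rewrite scaler_eq0 intr_eq0 (negPf D0) /= => /eqP //.
Qed.

Lemma rank_coker_le n (B : 'M[int]_n) : (rank_coker B <= n - \rank (mQ B))%N.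
Proof.
rewrite /rank_coker; apply/bigmax_leqP => r /asboolP [M hM].
rewrite leqNgt; apply/negP => hr.
set N := mQ M *m cokermx (mQ B).
have rN : (\rank N < r)%N.
  apply: leq_ltn_trans (mxrankM_maxr _ _) _; by rewrite mxrank_coker.
have : kermx N != 0.
  by rewrite -mxrank_eq0 mxrank_ker -lt0n subn_gt0.
case/eqP/row_matrixP/boolp.existsNP => i /eqP; rewrite row0 => ci.
set c := row i (kermx N) in ci.
have hc : c *m N = 0 by rewrite /c -row_mul mulmx_ker row0.
have : (c *m mQ M <= mQ B)%MS by rewrite submxE -mulmxA hc.
case/submxP => d hd.
have [D1 D10 [W1 hW1]] := clear_den c.
have [D2 D20 [W2 hW2]] := clear_den d.
have : D2 *: W1 = 0.
  apply: hM; exists (D1 *: W2); apply: mQ_inj.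
  rewrite !map_mxM !map_mxZ /= hW1 hW2 -!scalemxAl hd !scalerA mulrC.
  done.
move/(congr1 mQ); rewrite map_mxZ /= hW1 scalerA map_mx0.
move/eqP; rewrite scaler_eq0 mulf_eq0 !intr_eq0 (negPf D10) (negPf D20) /=.
by rewrite (negPf ci).
Qed.

Lemma Zrank_eq n (BQ : 'M[rat]_n) (S : 'rV[int]_n -> Prop) (s : nat)
  (M : 'M[int]_(s, n)) :
  (forall x, S x -> (mQ x <= BQ)%MS) -> indep_in S M -> \rank BQ = s -> Zrank S = s.
Proof.
move=> hS [hM1 hM2] rB.
apply/eqP; rewrite eqn_leq; apply/andP; split.
  apply/bigmax_leqP => r /asboolP [M' [h1 h2]].
  rewrite -rB -(eqP (indepQ h2)); apply: mxrankS.
  by apply/row_subP => i; rewrite -map_row; apply: hS.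
have hs : (s < n.+1)%N by rewrite ltnS -rB rank_leq_col.
apply: (@leq_bigmax_cond _ _ _ (Ordinal hs)).
by apply/asboolP; exists M.
Qed.

Unset Implicit Arguments.

Theorem proposition2p9 (n : nat) (E : finType) (o t : E -> 'I_n) :
  strongly_connected o t ->
  deltaX o t = 0 ->
  [/\ (forall y, BFimg o t (LX o t) y -> BFimg o t (@ZV n) y),
      (forall y, BFimg o t (@ZV n) y -> LX o t y),
      Zrank (BFimg o t (LX o t)) = Zrank (BFimg o t (@ZV n))
    & Zrank (BFimg o t (@ZV n)) = Zrank (LX o t)].
Proof.
move=> _ hd.
set B := BFmx o t.
have h1 : forall y, BFimg o t (LX o t) y -> BFimg o t (@ZV n) y.
  by move=> y [x _ ->]; exists x.
have h2 : forall y, BFimg o t (@ZV n) y -> LX o t y.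
  by move=> y [x _ ->]; rewrite /LX map_mxM submxMl.
have hr : rX o t = rank_coker B.
  by move/eqP: hd; rewrite /deltaX subr_eq0 eqz_nat => /eqP.
have hBB : \rank (mQ B *m mQ B) = \rank (mQ B).
  apply/eqP; rewrite eqn_leq mxrankM_maxr /= leqNgt; apply/negP => lt.
  have := rX_ge lt; rewrite -/B hr => h.
  by move: (leq_trans h (rank_coker_le B)); rewrite ltnn.
set f := maxrankfun (mQ B *m mQ B).
set M := rowsub f (B *m B).
have rowM : forall i, row i M = row (f i) B *m B by move=> i; rewrite row_rowsub row_mul.
have indM : forall c : 'rV[int]_(\rank (mQ B *m mQ B)), c *m M = 0 -> c = 0.
  move=> c hc; apply: mQ_inj; rewrite map_mx0.
  apply: (row_free_inj (maxrowsub_free (mQ B *m mQ B))); rewrite mul0mx.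
  have -> : rowsub f (mQ B *m mQ B) = mQ M.
    apply/matrixP => a b; rewrite !mxE rmorph_sum; apply: eq_bigr => k _.
    by rewrite !mxE rmorphM.
  by rewrite -map_mxM hc map_mx0.
have inL : forall i, BFimg o t (LX o t) (row i M).
  move=> i; rewrite rowM; exists (row (f i) B) => //.
  by rewrite /LX map_row row_sub.
have sL : forall x, LX o t x -> (mQ x <= mQ B)%MS by [].
have e1 := Zrank_eq (fun x hx => sL x (h2 x (h1 x hx))) (conj inL indM) (esym hBB).
have e2 := Zrank_eq (fun x hx => sL x (h2 x hx)) (conj (fun i => h1 _ (inL i)) indM) (esym hBB).
have e3 := Zrank_eq sL (conj (fun i => h2 _ (h1 _ (inL i))) indM) (esym hBB).
by split => //; rewrite ?e1 ?e2 ?e3.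
Qed.
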